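(* Let $\gamma$ be a conformal metric on $\mathbb C_\infty$ invariant under radial reflection, $\theta^*\gamma=\gamma$. Then for every $F\in\Upsilon_{0,B_0}$, $$\langle(\Theta F)\,F\rangle_\gamma\ge0.$$
   Context: Riemann sphere $\mathbb C_\infty$, radial reflection $\theta(z)=z/|z|^2=\bar z^{-1}$, $B_0=\{|z|<1\}$. Symbols: a symbol is a finite sequence $Z=[k_1,z_1,\dots,k_n,z_n]$ with $k_i\in\mathbb Z$, $z_i\in\mathbb C_\infty$; the product of symbols is concatenation. $\Upsilon$ is the free complex algebra generated by this monoid (finitely supported formal sums $F=\sum_ZF(Z)Z$); $\Upsilon_0$ consists of $F$ with $F(Z)=0$ whenever $Z$ has two coinciding points; $\Upsilon_A$ of $F$ with $F(Z)=0$ whenever $Z$ has a point outside $A$; $\Upsilon_{0,A}=\Upsilon_0\cap\Upsilon_A$. $\Theta[k_1,z_1,\dots,k_n,z_n]=[-k_1,\theta z_1,\dots,-k_n,\theta z_n]$, extended anti-linearly to $\Upsilon$. Expectations: for a conformal metric $\gamma=e^\sigma|dz|^2$ and $Z$ with distinct points all in $\mathbb C$, $\langle Z\rangle_\gamma=0$ if $\sum k_i\ne0$ and $\langle Z\rangle_\gamma=\exp(-\frac1{8\pi}\sum_ik_i^2\sigma(z_i))\prod_{i<j}|z_i-z_j|^{k_ik_j/2\pi}$ if $\sum k_i=0$ (this is the $\mu\to0$, then regularization-removed, limit of regularized exponentials $\prod[e^{ik_i\phi(z_i)}]_r$ of the Gaussian field with covariance $(-\Delta_\gamma+\mu)^{-1}$).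 If some point is $\infty$, set $\langle Z\rangle_\gamma=\langle[k_1,\beta^{-1}(z_1),\dots,k_n,\beta^{-1}(z_n)]\rangle_{\beta^*\gamma}$ for any Möbius map $\beta$ with all $\beta^{-1}(z_i)\in\mathbb C$ (independent of $\beta$). Extend linearly: $\langle F\rangle_\gamma=\sum_ZF(Z)\langle Z\rangle_\gamma$ for $F\in\Upsilon_0$. *)

(* Defs.v *)
From Stdlib Require Import Reals List ZArith ClassicalEpsilon.
From Coquelicot Require Import Coquelicot.
Import ListNotations.
Open Scope R_scope.

(** * Riemann sphere: [None] is the point at infinity. *)
Definition pt := option C.

Definition thetaC (z : C) : C := Cinv (Cconj z).
Definition theta (p : pt) : pt :=
  match p with
  | None => Some (RtoC 0)
  | Some z => if Ceq_dec z (RtoC 0) then None else Some (thetaC z)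
  end.

Definition symbol := list (Z * pt).

Definition pt_eq_dec (p q : pt) : {p = q} + {p <> q}.
Proof. decide equality; apply Ceq_dec. Defined.
Definition sym_eq_dec (Z1 Z2 : symbol) : {Z1 = Z2} + {Z1 <> Z2}.
Proof. apply list_eq_dec. intros [k p] [l q]. decide equality; [apply pt_eq_dec | apply Z.eq_dec]. Defined.

Definition Theta_sym (Zs : symbol) : symbol :=
  map (fun kp => (Z.opp (fst kp), theta (snd kp))) Zs.

(** * The free algebra Upsilon: an element is represented by a finite list of
    (coefficient, symbol) pairs, standing for the formal sum of c * Z.
    Its coefficient function F(Z) is [coef F Z]. *)
Definition formal := list (C * symbol).

Definition coef (F : formal) (Zs : symbol) : C :=
  fold_right Cplus (RtoC 0)
    (map (fun cz => if sym_eq_dec (snd cz) Zs then fst cz else RtoC 0) F).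

Definition mul_formal (F G : formal) : formal :=
  flat_map (fun cz1 => map (fun cz2 => (Cmult (fst cz1) (fst cz2), snd cz1 ++ snd cz2)) G) F.

Definition Theta (F : formal) : formal :=
  map (fun cz => (Cconj (fst cz), Theta_sym (snd cz))) F.

Definition distinct_pts (Zs : symbol) : Prop := NoDup (map snd Zs).

Definition in_B0 (p : pt) : Prop :=
  match p with Some z => Cmod z < 1 | None => False end.

Definition in_Upsilon_0_B0 (F : formal) : Prop :=
  forall Zs, coef F Zs <> RtoC 0 ->
    distinct_pts Zs /\ List.Forall (fun kp => in_B0 (snd kp)) Zs.

Definition dx (f : C -> R) : C -> R := fun z => Derive (fun t => f (t, snd z)) (fst z).
Definition dy (f : C -> R) : C -> R := fun z => Derive (fun t => f (fst z, t)) (snd z).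

Fixpoint Ck (n : nat) (f : C -> R) : Prop :=
  (forall z, continuous f z) /\
  match n with
  | O => True
  | S m => (forall z, ex_derive (fun t => f (t, snd z)) (fst z)
                   /\ ex_derive (fun t => f (fst z, t)) (snd z))
           /\ Ck m (dx f) /\ Ck m (dy f)
  end.

Definition smooth (f : C -> R) : Prop := forall n, Ck n f.

(** * Conformal metric on the Riemann sphere:
    gamma = e^sigma |dz|^2 in the chart z on C, and
    gamma = e^sigma_inf |dw|^2 in the chart w = 1/z around infinity,
    both densities smooth and compatible on the overlap. *)
Record sphere_metric := {
  sigma : C -> R;
  sigma_inf : C -> R;
  sigma_smooth : smooth sigma;
  sigma_inf_smooth : smooth sigma_inf;
  sigma_compat : forall w, w <> RtoC 0 ->
      sigma_inf w = sigma (Cinv w) - 4 * ln (Cmod w)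
}.

(** Since |d theta|^2 = |z|^{-4} |dz|^2, on C\{0} the
    pull-back has density sigma(theta z) - 4 ln|z|; at z = 0 the pull-back,
    computed in the chart w = 1/theta(z) = conj z at infinity, has density
    sigma_inf(0). *)
Definition reflection_invariant (g : sphere_metric) : Prop :=
  (forall z, z <> RtoC 0 -> sigma g z = sigma g (thetaC z) - 4 * ln (Cmod z)) /\
  sigma g 0 = sigma_inf g 0.

Fixpoint pair_prod (l : list (Z * C)) : R :=
  match l with
  | [] => 1
  | (k, z) :: t =>
      fold_right Rmult 1
        (map (fun lw => Rpower (Cmod (Cminus z (snd lw)))
                                (IZR k * IZR (fst lw) / (2 * PI))) t)
      * pair_prod t
  end.

Definition E_fin (s : C -> R) (l : list (Z * C)) : R :=
  if Z.eq_dec (fold_right Z.add 0%Z (map fst l)) 0%Z then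
    exp (- (1 / (8 * PI)) *
         fold_right Rplus 0 (map (fun kz => IZR (fst kz) ^ 2 * s (snd kz)) l))
    * pair_prod l
  else 0.

(** Mobius map beta_a(w) = a + 1/w (beta_a(0) = infinity, beta_a(infinity) = a);
    its inverse sends infinity to 0 and z to 1/(z - a). *)
Definition beta_inv (a : C) (p : pt) : C :=
  match p with None => RtoC 0 | Some z => Cinv (Cminus z a) end.

(** density of the pull-back metric beta_a^* gamma in the coordinate w:
    for w <> 0, sigma(a + 1/w) + 2 ln|beta_a'(w)| = sigma(a+1/w) - 4 ln|w|;
    at w = 0 (mapped to infinity), in the chart u = 1/beta_a(w) = w/(1+a w)
    with u'(0) = 1, it is sigma_inf(0). *)
Definition pull_sigma (g : sphere_metric) (a : C) (w : C) : R :=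
  if Ceq_dec w (RtoC 0) then sigma_inf g (RtoC 0)
  else sigma g (Cplus a (Cinv w)) - 4 * ln (Cmod w).

Fixpoint all_finite (Zs : symbol) : option (list (Z * C)) :=
  match Zs with
  | [] => Some []
  | (k, Some z) :: t =>
      match all_finite t with Some l => Some ((k, z) :: l) | None => None end
  | (_, None) :: _ => None
  end.

(** a := 1 + sum of |z_i| over the finite points: not one of the points. *)
Definition choose_a (Zs : symbol) : C :=
  RtoC (1 + fold_right Rplus 0
              (map (fun kp => match snd kp with Some z => Cmod z | None => 0 end) Zs)).

(** <Z>_gamma for a symbol with distinct points (0 by convention otherwise; this
    case never contributes for elements of Upsilon_0). If a point is infinity,
    use <[k_i, beta^{-1}(z_i)]>_{beta^* gamma} with the Mobius map beta = beta_a. *)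
Definition E_sym (g : sphere_metric) (Zs : symbol) : R :=
  if excluded_middle_informative (distinct_pts Zs) then
    match all_finite Zs with
    | Some l => E_fin (sigma g) l
    | None =>
        let a := choose_a Zs in
        E_fin (pull_sigma g a) (map (fun kp => (fst kp, beta_inv a (snd kp))) Zs)
    end
  else 0.

Definition E (g : sphere_metric) (F : formal) : C :=
  fold_right Cplus (RtoC 0)
    (map (fun Zs => Cmult (coef F Zs) (RtoC (E_sym g Zs)))
         (nodup sym_eq_dec (map snd F))).

(* Main.v *)
Require Import Defs.
From Stdlib Require Import Reals List ZArith Lra Lia ClassicalEpsilon.
From Coquelicot Require Import Coquelicot.
Import ListNotations.
Require Import Defs.
Open Scope R_scope.

Definition sumL {A} (f : A -> R) (l : list A) : R := fold_right Rplus 0 (map f l).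
Fixpoint sumN (f : nat -> R) (N : nat) : R :=
  match N with O => 0 | S n => sumN f n + f n end.

Lemma sumL_nil {A} (f : A -> R) : sumL f [] = 0. Proof. reflexivity. Qed.
Lemma sumL_cons {A} (f : A -> R) x l : sumL f (x :: l) = f x + sumL f l.
Proof. reflexivity. Qed.
Lemma sumL_app {A} (f : A -> R) l1 l2 : sumL f (l1 ++ l2) = sumL f l1 + sumL f l2.
Proof. induction l1; simpl. rewrite sumL_nil; lra. rewrite !sumL_cons, IHl1. lra. Qed.
Lemma sumL_ext {A} (f g : A -> R) l : (forall x, In x l -> f x = g x) -> sumL f l = sumL g l.
Proof. induction l; intros H; auto. rewrite !sumL_cons, H, IHl; simpl; auto. intros; apply H; simpl; auto. Qed.
Lemma sumL_plus {A} (f g : A -> R) l : sumL (fun x => f x + g x) l = sumL f l + sumL g l.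
Proof. induction l; [simpl; unfold sumL; simpl; lra|]. rewrite !sumL_cons, IHl. lra. Qed.
Lemma sumL_scal {A} (f : A -> R) c l : sumL (fun x => c * f x) l = c * sumL f l.
Proof. induction l; [unfold sumL; simpl; lra|]. rewrite !sumL_cons, IHl. lra. Qed.
Lemma sumL_opp {A} (f : A -> R) l : sumL (fun x => - f x) l = - sumL f l.
Proof. induction l; [unfold sumL; simpl; lra|]. rewrite !sumL_cons, IHl. lra. Qed.
Lemma sumL_zero {A} (f : A -> R) l : (forall x, In x l -> f x = 0) -> sumL f l = 0.
Proof. intros H. rewrite (sumL_ext f (fun _ => 0)) by auto. induction l; auto.
  rewrite sumL_cons, IHl; [lra|]. intros; apply H; simpl; auto. Qed.
Lemma sumL_swap {A B} (f : A -> B -> R) l1 l2 :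
  sumL (fun x => sumL (fun y => f x y) l2) l1 = sumL (fun y => sumL (fun x => f x y) l1) l2.
Proof.
  induction l1; simpl.
  - symmetry; apply sumL_zero; reflexivity.
  - rewrite sumL_cons, IHl1. rewrite <- sumL_plus. apply sumL_ext; intros; rewrite sumL_cons; lra.
Qed.
Lemma sumL_map {A B} (f : B -> R) (g : A -> B) l : sumL f (map g l) = sumL (fun x => f (g x)) l.
Proof. unfold sumL. rewrite map_map. reflexivity. Qed.
Lemma sumL_nonneg {A} (f : A -> R) l : (forall x, In x l -> 0 <= f x) -> 0 <= sumL f l.
Proof. induction l; intros H; [unfold sumL; simpl; lra|]. rewrite sumL_cons.
  assert (0 <= f a) by (apply H; simpl; auto). assert (0 <= sumL f l) by (apply IHl; intros; apply H; simpl; auto). lra. Qed.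
Lemma sumL_filter {A} (f : A -> R) (p : A -> bool) l :
  (forall x, In x l -> p x = false -> f x = 0) -> sumL f l = sumL f (filter p l).
Proof. induction l; intros H; simpl; auto. destruct (p a) eqn:E.
  - rewrite !sumL_cons, IHl; auto. intros; apply H; simpl; auto.
  - rewrite sumL_cons, H, IHl; simpl; auto; [lra|]. intros; apply H; simpl; auto. Qed.
Lemma sumN_plus f g N : sumN (fun n => f n + g n) N = sumN f N + sumN g N.
Proof. induction N; simpl; lra. Qed.
Lemma sumN_scal f c N : sumN (fun n => c * f n) N = c * sumN f N.
Proof. induction N; simpl; lra. Qed.
Lemma sumN_ext f g N : (forall n, (n < N)%nat -> f n = g n) -> sumN f N = sumN g N.
Proof. induction N; intros H; simpl; auto. f_equal; [apply IHN; intros; apply H; lia | apply H; lia]. Qed.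
Lemma sumL_sumN {A} (f : A -> nat -> R) l N :
  sumL (fun x => sumN (fun n => f x n) N) l = sumN (fun n => sumL (fun x => f x n) l) N.
Proof. induction N; simpl.
  - apply sumL_zero; auto.
  - rewrite sumL_plus, IHN. reflexivity. Qed.
Lemma sumL_lim {A} (u : nat -> A -> R) (v : A -> R) l :
  (forall x, In x l -> is_lim_seq (fun N => u N x) (v x)) ->
  is_lim_seq (fun N => sumL (u N) l) (sumL v l).
Proof. induction l; intros H.
  - unfold sumL; simpl. apply is_lim_seq_const.
  - rewrite sumL_cons. apply (is_lim_seq_ext (fun N => u N a + sumL (u N) l)).
    { intros; rewrite sumL_cons; auto. }
    apply is_lim_seq_plus'. apply H; simpl; auto. apply IHl; intros; apply H; simpl; auto. Qed.
Lemma sumL_indic (V : list Z) (u : Z) (f : Z -> R) : NoDup V -> In u V ->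
  sumL (fun v => if Z.eq_dec u v then f v else 0) V = f u.
Proof. induction V; intros Hn Hi; [destruct Hi|]. inversion Hn; subst. rewrite sumL_cons.
  destruct (Z.eq_dec u a).
  - subst. rewrite sumL_zero; [lra|]. intros x Hx. destruct (Z.eq_dec a x); subst; auto; contradiction.
  - destruct Hi; [congruence|]. rewrite IHV; auto; lra. Qed.

Lemma lim_scal (u : nat -> R) (c l : R) : is_lim_seq u l -> is_lim_seq (fun n => c * u n) (c * l).
Proof. intros H. apply (is_lim_seq_mult' (fun _ => c) u c l); auto. apply is_lim_seq_const. Qed.

Definition Qf {A} (K : A -> A -> R) (y : A -> R) (l : list A) : R :=
  sumL (fun a => sumL (fun b => y a * y b * K a b) l) l.
Definition PSD {A} (P : A -> Prop) (K : A -> A -> R) : Prop :=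
  forall l y, (forall a, In a l -> P a) -> 0 <= Qf K y l.

Lemma Qf_ext {A} (K1 K2 : A -> A -> R) y l : (forall a b, In a l -> In b l -> K1 a b = K2 a b) ->
  Qf K1 y l = Qf K2 y l.
Proof. intros H. unfold Qf. apply sumL_ext; intros; apply sumL_ext; intros. rewrite H; auto. Qed.
Lemma Qf_plus {A} (K1 K2 : A -> A -> R) y l :
  Qf (fun a b => K1 a b + K2 a b) y l = Qf K1 y l + Qf K2 y l.
Proof. unfold Qf. rewrite <- sumL_plus. apply sumL_ext; intros. rewrite <- sumL_plus.
  apply sumL_ext; intros. ring. Qed.
Lemma Qf_scal {A} (K : A -> A -> R) c y l : Qf (fun a b => c * K a b) y l = c * Qf K y l.
Proof. unfold Qf. rewrite <- sumL_scal. apply sumL_ext; intros. rewrite <- sumL_scal.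
  apply sumL_ext; intros. ring. Qed.
Lemma Qf_rank1 {A} (K : A -> A -> R) (phi : A -> R) y l :
  Qf (fun a b => phi a * phi b * K a b) y l = Qf K (fun a => y a * phi a) l.
Proof. unfold Qf. apply sumL_ext; intros; apply sumL_ext; intros. ring. Qed.

Lemma PSD_one {A} (P : A -> Prop) : PSD P (fun _ _ => 1).
Proof. intros l y _. unfold Qf.
  rewrite (sumL_ext _ (fun a => y a * sumL y l)).
  - rewrite (sumL_ext _ (fun a => sumL y l * y a)) by (intros; ring). rewrite sumL_scal.
    apply Rle_0_sqr.
  - intros. rewrite <- sumL_scal. apply sumL_ext; intros; ring. Qed.

Lemma PSD_scale {A} (P : A -> Prop) K (g : A -> R) : PSD P K -> PSD P (fun a b => g a * g b * K a b).
Proof. intros H l y Hl. rewrite Qf_rank1. apply H; auto. Qed.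

Lemma PSD_lim {A} (P : A -> Prop) (Kn : nat -> A -> A -> R) (K : A -> A -> R) :
  (forall N, PSD P (Kn N)) -> (forall a b, P a -> P b -> is_lim_seq (fun N => Kn N a b) (K a b)) ->
  PSD P K.
Proof. intros H1 H2 l y Hl.
  assert (Hlim : is_lim_seq (fun N => Qf (Kn N) y l) (Qf K y l)).
  { unfold Qf. apply sumL_lim; intros a Ha. apply sumL_lim; intros b Hb.
    apply lim_scal. apply H2; auto. }
  assert (HH := is_lim_seq_le (fun _ => 0) _ 0 _ (fun N => H1 N l y Hl) (is_lim_seq_const 0) Hlim).
  simpl in HH. exact HH. Qed.

Lemma PSD_indic {A} (P : A -> Prop) K (q : A -> Z) : PSD P K ->
  PSD P (fun a b => if Z.eq_dec (q a) (q b) then K a b else 0).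
Proof. intros H l y Hl.
  set (V := nodup Z.eq_dec (map q l)).
  assert (HV : forall a, In a l -> In (q a) V).
  { intros a Ha. apply nodup_In. apply in_map; auto. }
  assert (E : Qf (fun a b => if Z.eq_dec (q a) (q b) then K a b else 0) y l =
     sumL (fun v => Qf K (fun a => y a * (if Z.eq_dec (q a) v then 1 else 0)) l) V).
  { unfold Qf. symmetry. rewrite sumL_swap. apply sumL_ext; intros a Ha. rewrite sumL_swap.
    apply sumL_ext; intros b Hb.
    transitivity (sumL (fun v => if Z.eq_dec (q a) v then y a * y b * (if Z.eq_dec (q b) v then 1 else 0) * K a b else 0) V).
    - apply sumL_ext; intros v Hv. destruct (Z.eq_dec (q a) v), (Z.eq_dec (q b) v); ring.
    - rewrite (sumL_indic V (q a) (fun v => y a * y b * (if Z.eq_dec (q b) v then 1 else 0) * K a b)).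
      + destruct (Z.eq_dec (q b) (q a)), (Z.eq_dec (q a) (q b)); try congruence; ring.
      + apply NoDup_nodup.
      + auto. }
  rewrite E. apply sumL_nonneg; intros. apply H; auto. Qed.

Lemma Qf_sum_f {A} (K : A -> A -> R) (G : nat -> A -> A -> R) y l N :
  Qf (fun a b => K a b * sum_f_R0 (fun k => G k a b) N) y l =
  sum_f_R0 (fun k => Qf (fun a b => K a b * G k a b) y l) N.
Proof. induction N; simpl.
  - reflexivity.
  - rewrite <- IHN, <- Qf_plus. apply Qf_ext; intros; ring. Qed.

Lemma PSD_expstep {A} (P : A -> Prop) K (alpha : R) (phi : A -> R) : PSD P K -> 0 <= alpha ->
  PSD P (fun a b => K a b * exp (alpha * phi a * phi b)).
Proof. intros H Ha. apply (PSD_lim P (fun N a b => K a b * E1 (alpha * phi a * phi b) N)).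
  - intros N l y Hl. unfold E1. rewrite Qf_sum_f.
    apply cond_pos_sum. intros k.
    rewrite (Qf_ext _ (fun a b => (/ INR (fact k) * alpha ^ k) *
                        ((phi a ^ k) * (phi b ^ k) * K a b))).
    + rewrite Qf_scal, Qf_rank1. apply Rmult_le_pos.
      * apply Rmult_le_pos. left; apply Rinv_0_lt_compat, INR_fact_lt_0. apply pow_le; auto.
      * apply H; auto.
    + intros. rewrite !Rpow_mult_distr. ring.
  - intros a b _ _. apply lim_scal. apply is_lim_seq_Reals. apply E1_cvg.
Qed.

Lemma PSD_expsum {A} (P : A -> Prop) (alpha : nat -> R) (phi psi : nat -> A -> R) N :
  (forall n, 0 <= alpha n) ->
  PSD P (fun a b => exp (sumN (fun n => alpha n * (phi n a * phi n b + psi n a * psi n b)) N)).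
Proof. intros Hal. induction N; simpl.
  - eapply (fun H => PSD_lim P (fun _ => fun _ _ => 1) _ H).
    + intros; apply PSD_one.
    + intros. rewrite exp_0. apply is_lim_seq_const.
  - assert (H2 := PSD_expstep P _ (alpha N) (psi N)
       (PSD_expstep P _ (alpha N) (phi N) IHN (Hal N)) (Hal N)).
    intros l y Hl. rewrite (Qf_ext _ (fun a b => exp (sumN (fun n => alpha n * (phi n a * phi n b + psi n a * psi n b)) N) *
                     exp (alpha N * phi N a * phi N b) * exp (alpha N * psi N a * psi N b))).
    + apply H2; auto.
    + intros. rewrite <- !exp_plus. f_equal. ring.
Qed.

Fixpoint cpow (z : C) (n : nat) : C := match n with O => RtoC 1 | S m => Cmult z (cpow z m) end.
Fixpoint sumNC (f : nat -> C) (N : nat) : C :=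
  match N with O => RtoC 0 | S n => Cplus (sumNC f n) (f n) end.

Lemma sumNC_S f N : sumNC f (S N) = Cplus (sumNC f N) (f N).
Proof. reflexivity. Qed.

Lemma Cmod_cpow z n : Cmod (cpow z n) = Cmod z ^ n.
Proof. induction n; simpl. apply Cmod_1. rewrite Cmod_mult, IHn. reflexivity. Qed.

Lemma Re_sumNC f N : Re (sumNC f N) = sumN (fun n => Re (f n)) N.
Proof. induction N; simpl; auto. unfold Re in *. simpl. rewrite IHN. reflexivity. Qed.

Lemma Cmod_sq (x : C) : Cmod x ^ 2 = fst x ^ 2 + snd x ^ 2.
Proof. unfold Cmod. rewrite pow2_sqrt; auto. apply Rplus_le_le_0_compat; apply pow2_ge_0. Qed.

Lemma ln_Cmod (x : C) : x <> RtoC 0 -> ln (Cmod x) = / 2 * ln (fst x ^ 2 + snd x ^ 2).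
Proof. intros H. apply Cmod_gt_0 in H. rewrite <- Cmod_sq. simpl. rewrite Rmult_1_r.
  rewrite ln_mult by auto. field. Qed.


Definition Gf (y : C) (t : R) := - / 2 * ln ((1 - t * (fst y)) ^ 2 + (t * (snd y)) ^ 2).
Definition Gd (y : C) (t : R) := ((fst y) - t * ((fst y) ^ 2 + (snd y) ^ 2)) / ((1 - t * (fst y)) ^ 2 + (t * (snd y)) ^ 2).
Definition Sf (y : C) (N : nat) (t : R) := sumN (fun n => Re (cpow y (S n)) * t ^ (S n) / INR (S n)) N.
Definition Sd (y : C) (N : nat) (t : R) := sumN (fun n => Re (cpow y (S n)) * t ^ n) N.

Lemma wdef (y : C) (Hy : Cmod y < 1) t : (1 - t * (fst y)) ^ 2 + (t * (snd y)) ^ 2 = Cmod (Cminus 1 (Cmult (RtoC t) y)) ^ 2.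
Proof. rewrite Cmod_sq.  destruct y as [u v]. simpl. ring. Qed.

Lemma w_lower (y : C) (Hy : Cmod y < 1) t : 0 <= t <= 1 -> 1 - Cmod y <= Cmod (Cminus 1 (Cmult (RtoC t) y)).
Proof. intros Ht.
  assert (H1 : Cmod (RtoC 1) <= Cmod (Cminus 1 (Cmult (RtoC t) y)) + Cmod (Cmult (RtoC t) y)).
  { rewrite <- Cmod_triangle. right. f_equal. ring. }
  rewrite Cmod_1, Cmod_mult, Cmod_R, Rabs_pos_eq in H1 by lra.
  assert (t * Cmod y <= Cmod y). { assert (0 <= Cmod y) by apply Cmod_ge_0. nra. }
  lra. Qed.

Lemma den_pos (y : C) (Hy : Cmod y < 1) t : 0 <= t <= 1 -> 0 < (1 - t * (fst y)) ^ 2 + (t * (snd y)) ^ 2.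
Proof. intros Ht. rewrite (wdef y Hy). apply pow_lt. assert (H := (w_lower y Hy) t Ht). lra. Qed.

Lemma Gf_derive (y : C) (Hy : Cmod y < 1) t : 0 < (1 - t * (fst y)) ^ 2 + (t * (snd y)) ^ 2 -> is_derive (Gf y) t (Gd y t).
Proof. intros H. unfold Gf, Gd. auto_derive.
  - simpl in H. lra.
  - field. simpl in H. lra. Qed.

Lemma Sf_derive (y : C) (Hy : Cmod y < 1) N t : is_derive (Sf y N) t (Sd y N t).
Proof. induction N; unfold Sf, Sd; simpl.
  - apply (is_derive_const 0).
  - apply (is_derive_plus (Sf y N) (fun t => Re (cpow y (S N)) * t ^ S N / INR (S N))); auto.
    auto_derive; auto.
    change (match N with 0%nat => 1 | S _ => INR N + 1 end) with (INR (S N)).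
    field. apply not_0_INR. lia. Qed.

Lemma geomC (y : C) (Hy : Cmod y < 1) N t : Cmult (sumNC (fun n => Cmult (cpow y (S n)) (RtoC (t ^ n))) N)
                          (Cminus 1 (Cmult (RtoC t) y))
                 = Cminus y (Cmult (cpow y (S N)) (RtoC (t ^ N))).
Proof. induction N.
  - simpl. ring.
  - rewrite sumNC_S, Cmult_plus_distr_r, IHN. change (cpow y (S (S N))) with (Cmult y (cpow y (S N))).
    change (t ^ S N) with (t * t ^ N). rewrite RtoC_mult. ring. Qed.

Lemma Gd_Re (y : C) (Hy : Cmod y < 1) t : 0 <= t <= 1 -> Gd y t = Re (Cdiv y (Cminus 1 (Cmult (RtoC t) y))).
Proof. intros Ht. assert (H := (den_pos y Hy) t Ht). unfold Gd. 
  destruct y as [u v]. simpl in *. unfold Re; simpl. field. lra. Qed.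

Lemma D_bound (y : C) (Hy : Cmod y < 1) N t : 0 <= t <= 1 -> Rabs (Gd y t - Sd y N t) <= Cmod y ^ (S N) / (1 - Cmod y).
Proof. intros Ht.
  set (w := Cminus 1 (Cmult (RtoC t) y)).
  assert (Hw : 1 - Cmod y <= Cmod w) by (apply (w_lower y Hy); auto).
  assert (Hw0 : w <> RtoC 0). { intro E. rewrite E, Cmod_0 in Hw. lra. }
  assert (E1 : Sd y N t = Re (Cdiv (Cminus y (Cmult (cpow y (S N)) (RtoC (t ^ N)))) w)).
  { rewrite <- ((geomC y Hy) N t). fold w. unfold Cdiv. rewrite <- Cmult_assoc, Cinv_r, Cmult_1_r by auto.
    rewrite Re_sumNC. unfold Sd. apply sumN_ext. intros. unfold Re; simpl. ring. }
  rewrite (Gd_Re y Hy), E1 by auto. fold w.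
  replace (Re (Cdiv y w) - Re (Cdiv (Cminus y (Cmult (cpow y (S N)) (RtoC (t ^ N)))) w))
    with (Re (Cdiv (Cmult (cpow y (S N)) (RtoC (t ^ N))) w)).
  2:{ unfold Cdiv, Cminus. rewrite Cmult_plus_distr_r. unfold Re; simpl. ring. }
  eapply Rle_trans. apply re_le_Cmod.
  rewrite Cmod_div, Cmod_mult, Cmod_cpow, Cmod_R by auto.
  assert (0 <= Cmod y) by apply Cmod_ge_0.
  assert (0 <= t ^ N <= 1). { split. apply pow_le; lra. rewrite <- (pow1 N). apply pow_incr; lra. }
  rewrite Rabs_pos_eq by lra.
  assert (0 <= Cmod y ^ S N) by (apply pow_le; auto).
  unfold Rdiv. apply Rmult_le_compat.
  - apply Rmult_le_pos; lra.
  - left; apply Rinv_0_lt_compat; lra.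
  - rewrite <- (Rmult_1_r (Cmod y ^ S N)) at 2. apply Rmult_le_compat_l; lra.
  - apply Rinv_le_contravar; lra.
Qed.

Lemma Sf0 (y : C) (Hy : Cmod y < 1) N : Sf y N 0 = 0.
Proof. unfold Sf. induction N; auto. change (sumN (fun n => Re (cpow y (S n)) * 0 ^ S n / INR (S n)) (S N))
  with (sumN (fun n => Re (cpow y (S n)) * 0 ^ S n / INR (S n)) N + Re (cpow y (S N)) * 0 ^ S N / INR (S N)).
  rewrite IHN. rewrite pow_i by lia. unfold Rdiv. ring. Qed.
Lemma Gf0 (y : C) (Hy : Cmod y < 1) : Gf y 0 = 0.
Proof. unfold Gf. replace ((1 - 0 * (fst y)) ^ 2 + (0 * (snd y)) ^ 2) with 1 by ring. rewrite ln_1. ring. Qed.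
Lemma Gf1 (y : C) (Hy : Cmod y < 1) : Gf y 1 = - ln (Cmod (Cminus 1 y)).
Proof. assert (H := (den_pos y Hy) 1 ltac:(lra)). rewrite (wdef y Hy) in H.
  assert (H0 : Cminus 1 (Cmult (RtoC 1) y) <> RtoC 0).
  { intro E. rewrite E, Cmod_0 in H. simpl in H. lra. }
  replace (Cmult (RtoC 1) y) with y in * by ring.
  rewrite ln_Cmod by auto. unfold Gf. destruct y as [u v]. simpl.
  assert (E: forall p q, p = q -> -/2 * ln p = -(/2 * ln q)) by (intros; subst; ring). apply E. ring. Qed.
Lemma Sf1 (y : C) (Hy : Cmod y < 1) N : Sf y N 1 = sumN (fun n => Re (cpow y (S n)) / INR (S n)) N.
Proof. unfold Sf. apply sumN_ext; intros. rewrite pow1. unfold Rdiv. ring. Qed.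

Lemma log_series_aux (y : C) (Hy : Cmod y < 1) N : Rabs (- ln (Cmod (Cminus 1 y)) - sumN (fun n => Re (cpow y (S n)) / INR (S n)) N)
   <= Cmod y ^ (S N) / (1 - Cmod y).
Proof.
  destruct (MVT_gen (fun t => Gf y t - Sf y N t) 0 1 (fun t => Gd y t - Sd y N t)) as [c [Hc Hm]].
  - intros x Hx. rewrite Rmin_left, Rmax_right in Hx by lra.
    apply (is_derive_minus (Gf y) (Sf y N)). apply (Gf_derive y Hy), (den_pos y Hy); lra. apply (Sf_derive y Hy).
  - intros x Hx. rewrite Rmin_left, Rmax_right in Hx by lra.
    apply continuity_pt_filterlim. apply (ex_derive_continuous (fun t => Gf y t - Sf y N t)).
    eexists. apply (is_derive_minus (Gf y) (Sf y N)). apply (Gf_derive y Hy), (den_pos y Hy); lra. apply (Sf_derive y Hy).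
  - rewrite Rmin_left, Rmax_right in Hc by lra.
    rewrite (Gf0 y Hy), (Sf0 y Hy), (Gf1 y Hy), (Sf1 y Hy) in Hm. rewrite !Rminus_0_r, Rmult_1_r in Hm.
    rewrite Hm. apply (D_bound y Hy); auto. Qed.

Lemma log_series (y : C) (Hy : Cmod y < 1) : is_lim_seq (fun N => sumN (fun n => Re (cpow y (S n)) / INR (S n)) N)
                              (- ln (Cmod (Cminus 1 y))).
Proof.
  set (L := - ln (Cmod (Cminus 1 y))).
  assert (Hb : is_lim_seq (fun N => Cmod y ^ (S N) / (1 - Cmod y)) 0).
  { apply (is_lim_seq_ext (fun N => (Cmod y / (1 - Cmod y)) * (Cmod y ^ N))).
    - intros; simpl; field. lra.
    - replace (Finite 0) with (Finite ((Cmod y / (1 - Cmod y)) * 0)) by (f_equal; ring).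
      apply lim_scal. apply is_lim_seq_geom. rewrite Rabs_pos_eq; auto. apply Cmod_ge_0. }
  assert (Hd : is_lim_seq (fun N => L - sumN (fun n => Re (cpow y (S n)) / INR (S n)) N) 0).
  { apply (is_lim_seq_le_le (fun N => - (Cmod y ^ (S N) / (1 - Cmod y))) _
                            (fun N => Cmod y ^ (S N) / (1 - Cmod y))).
    - intros N. apply Rabs_le_between. apply (log_series_aux y Hy).
    - replace (Finite 0) with (Finite (-1 * 0)) by (f_equal; ring).
      apply (is_lim_seq_ext (fun N => -1 * (Cmod y ^ (S N) / (1 - Cmod y)))).
      intros; ring. apply lim_scal; auto.
    - auto. }
  apply (is_lim_seq_ext (fun N => L - (L - sumN (fun n => Re (cpow y (S n)) / INR (S n)) N))).
  - intros; ring.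
  - replace (Finite L) with (Finite (L - 0)) by (f_equal; ring).
    apply (is_lim_seq_minus' (fun _ => L)); auto. apply is_lim_seq_const.
Qed.


Fixpoint pairsum {A} (f : A -> A -> R) (l : list A) : R :=
  match l with [] => 0 | x :: t => sumL (f x) t + pairsum f t end.

Lemma pairsum_app {A} (f : A -> A -> R) l1 l2 :
  pairsum f (l1 ++ l2) = pairsum f l1 + pairsum f l2 + sumL (fun x => sumL (f x) l2) l1.
Proof. induction l1; simpl. rewrite sumL_nil; lra. rewrite sumL_app, IHl1, sumL_cons. lra. Qed.
Lemma pairsum_map {A B} (f : B -> B -> R) (g : A -> B) l :
  pairsum f (map g l) = pairsum (fun x y => f (g x) (g y)) l.
Proof. induction l; simpl; auto. rewrite IHl, sumL_map. reflexivity. Qed.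
Lemma pairsum_plus {A} (f g : A -> A -> R) l :
  pairsum (fun x y => f x y + g x y) l = pairsum f l + pairsum g l.
Proof. induction l; simpl; [lra|]. rewrite IHl, sumL_plus. lra. Qed.
Lemma pairsum_scal {A} (f : A -> A -> R) c l :
  pairsum (fun x y => c * f x y) l = c * pairsum f l.
Proof. induction l; simpl; [lra|]. rewrite IHl, sumL_scal. lra. Qed.
Lemma pairsum_FOP {A} (f g : A -> A -> R) l :
  ForallOrdPairs (fun x y => f x y = g x y) l -> pairsum f l = pairsum g l.
Proof. induction 1; simpl; auto. rewrite IHForallOrdPairs. f_equal.
  apply sumL_ext. intros x Hx. rewrite Forall_forall in H. auto. Qed.
Lemma pairsum_cL {A} (c L : A -> R) l :
  pairsum (fun p q => c p * c q * (L p + L q)) l = sumL (fun p => c p * L p * (sumL c l - c p)) l.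
Proof. induction l; simpl; auto. rewrite IHl, !sumL_cons.
  rewrite (sumL_ext (fun q => c a * c q * (L a + L q)) (fun q => (c a * L a) * c q + c a * (c q * L q))) by (intros; ring).
  rewrite sumL_plus, !sumL_scal.
  rewrite (sumL_ext (fun p => c p * L p * (c a + sumL c l - c p)) (fun p => c a * (c p * L p) + c p * L p * (sumL c l - c p))) by (intros; ring).
  rewrite sumL_plus, sumL_scal. ring. Qed.

Lemma prod_exp {A} (f : A -> R) l : fold_right Rmult 1 (map (fun x => exp (f x)) l) = exp (sumL f l).
Proof. induction l; simpl. rewrite sumL_nil, exp_0; auto. rewrite sumL_cons, exp_plus, IHl; auto. Qed.

Definition PS (l : list (Z * C)) : R :=
  pairsum (fun p q => IZR (fst p) * IZR (fst q) / (2 * PI) * ln (Cmod (Cminus (snd p) (snd q)))) l.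

Lemma pair_prod_exp l : pair_prod l = exp (PS l).
Proof. induction l as [|[k z] t IH]. unfold PS; simpl. rewrite exp_0; auto.
  unfold PS; simpl pairsum; simpl pair_prod. rewrite exp_plus. fold (PS t). rewrite <- IH. f_equal.
  rewrite <- prod_exp. f_equal. Qed.

Definition SSum (s : C -> R) (l : list (Z * C)) := sumL (fun kz => IZR (fst kz) ^ 2 * s (snd kz)) l.

Lemma E_fin_exp s l : E_fin s l =
  if Z.eq_dec (fold_right Z.add 0%Z (map fst l)) 0%Z then exp (-(1/(8*PI)) * SSum s l + PS l) else 0.
Proof. unfold E_fin. destruct Z.eq_dec; auto. rewrite pair_prod_exp, exp_plus. reflexivity. Qed.

Lemma sum_charges_IZR {A} (ch : A -> Z) l :
  IZR (fold_right Z.add 0%Z (map ch l)) = sumL (fun p => IZR (ch p)) l.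
Proof. induction l; simpl; auto. rewrite plus_IZR, IHl, sumL_cons. reflexivity. Qed.

Lemma FOP_impl {A} (R1 R2 : A -> A -> Prop) l : (forall x y, R1 x y -> R2 x y) ->
  ForallOrdPairs R1 l -> ForallOrdPairs R2 l.
Proof. intros H. induction 1; constructor; auto. revert H0. apply Forall_impl. intros; apply H; auto. Qed.

Lemma covariance {A} (l : list A) (ch : A -> Z) (pos : A -> C) (s : C -> R) (s0 L : A -> R) (D : A -> A -> R) :
  ForallOrdPairs (fun p q => ln (Cmod (Cminus (pos p) (pos q))) = D p q + L p + L q) l ->
  List.Forall (fun p => s (pos p) = s0 p - 4 * L p) l ->
  sumL (fun p => IZR (ch p)) l = 0 ->
  -(1/(8*PI)) * SSum s (map (fun p => (ch p, pos p)) l) + PS (map (fun p => (ch p, pos p)) l)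
  = -(1/(8*PI)) * sumL (fun p => IZR (ch p) ^ 2 * s0 p) l
    + pairsum (fun p q => IZR (ch p) * IZR (ch q) / (2 * PI) * D p q) l.
Proof. intros Hp Hs Hq. unfold SSum, PS. rewrite sumL_map, pairsum_map. simpl.
  rewrite (pairsum_FOP _ (fun p q => IZR (ch p) * IZR (ch q) / (2 * PI) * D p q
     + / (2 * PI) * (IZR (ch p) * IZR (ch q) * (L p + L q)))).
  2:{ revert Hp. apply FOP_impl. intros x y E. rewrite E. field. apply PI_neq0. }
  rewrite pairsum_plus, pairsum_scal, (pairsum_cL (fun p => IZR (ch p))), Hq.
  rewrite (sumL_ext (fun p => IZR (ch p) ^ 2 * s (pos p)) (fun p => IZR (ch p) ^ 2 * s0 p + (-4) * (IZR (ch p) ^ 2 * L p))).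
  2:{ intros x Hx. rewrite Forall_forall in Hs. rewrite Hs by auto. ring. }
  rewrite sumL_plus, sumL_scal.
  rewrite (sumL_ext (fun p => IZR (ch p) * L p * (0 - IZR (ch p))) (fun p => - (IZR (ch p) ^ 2 * L p))) by (intros; ring).
  rewrite sumL_opp. replace (sumL (fun p => IZR (ch p) * (IZR (ch p) * 1) * s0 p) l) with (sumL (fun x => IZR (ch x) ^ 2 * s0 x) l) by (apply sumL_ext; intros; ring). field. apply PI_neq0. Qed.

Lemma Cconj_0 : Cconj (RtoC 0) = RtoC 0.
Proof. apply injective_projections; simpl; ring. Qed.
Lemma Cconj_neq0 w : w <> RtoC 0 -> Cconj w <> RtoC 0.
Proof. intros H E. apply H. rewrite <- (Cconj_conj w), E. apply Cconj_0. Qed.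
Lemma Cmod_pos w : w <> RtoC 0 -> 0 < Cmod w.
Proof. apply Cmod_gt_0. Qed.

Lemma ln_Cmod_q (N d1 d2 : C) : N <> RtoC 0 -> d1 <> RtoC 0 -> d2 <> RtoC 0 ->
  ln (Cmod (Cdiv N (Cmult d1 d2))) = ln (Cmod N) - ln (Cmod d1) - ln (Cmod d2).
Proof. intros H1 H2 H3. assert (Cmult d1 d2 <> RtoC 0) by (apply Cmult_neq_0; auto).
  rewrite Cmod_div, Cmod_mult by auto. unfold Rdiv.
  apply Cmod_pos in H1; apply Cmod_pos in H2; apply Cmod_pos in H3.
  rewrite ln_mult, ln_Rinv, ln_mult; auto; try lra; try apply Rmult_lt_0_compat; auto.
  apply Rinv_0_lt_compat, Rmult_lt_0_compat; auto. Qed.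

Lemma Cmod_thetaC w : w <> RtoC 0 -> Cmod (thetaC w) = / Cmod w.
Proof. intros H. unfold thetaC. rewrite Cmod_inv, Cmod_conj; auto. apply Cconj_neq0; auto. Qed.

Lemma Cmod_conj_mult_lt1 w z : Cmod w < 1 -> Cmod z < 1 -> Cmod (Cmult (Cconj w) z) < 1.
Proof. intros. rewrite Cmod_mult, Cmod_conj.
  assert (0 <= Cmod w) by apply Cmod_ge_0. assert (0 <= Cmod z) by apply Cmod_ge_0. nra. Qed.

Lemma one_minus_neq0 y : Cmod y < 1 -> Cminus (RtoC 1) y <> RtoC 0.
Proof. intros H E. assert (y = RtoC 1). { rewrite <- (Cplus_0_l y), <- E. ring. }
  subst. rewrite Cmod_1 in H. lra. Qed.

Lemma FOP_app {A} (R0 : A -> A -> Prop) l1 l2 : ForallOrdPairs R0 l1 -> ForallOrdPairs R0 l2 ->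
  (forall x y, In x l1 -> In y l2 -> R0 x y) -> ForallOrdPairs R0 (l1 ++ l2).
Proof. induction 1; intros H2 H3; simpl; auto. constructor.
  - apply Forall_app; split; auto. apply Forall_forall; intros; apply H3; simpl; auto.
  - apply IHForallOrdPairs; auto. intros; apply H3; simpl; auto. Qed.
Lemma FOP_map {A B} (R0 : B -> B -> Prop) (f : A -> B) l :
  ForallOrdPairs (fun x y => R0 (f x) (f y)) l -> ForallOrdPairs R0 (map f l).
Proof. induction 1; simpl; constructor; auto. apply Forall_map; auto. Qed.
Lemma FOP_nodup {A B} (R0 : A -> A -> Prop) (f : A -> B) l : NoDup (map f l) ->
  (forall a b, In a l -> In b l -> f a <> f b -> R0 a b) -> ForallOrdPairs R0 l.
Proof. induction l; intros Hn H; constructor.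
  - simpl in Hn. inversion Hn; subst. apply Forall_forall. intros b Hb. apply H; simpl; auto.
    intros E. apply H2. rewrite E. apply in_map; auto.
  - inversion Hn; subst. apply IHl; auto. intros; apply H; simpl; auto. Qed.
Lemma NoDup_map_transfer {A B1 B2} (g : A -> B1) (f : A -> B2) l : NoDup (map g l) ->
  (forall x y, In x l -> In y l -> f x = f y -> g x = g y) -> NoDup (map f l).
Proof. induction l; intros Hn H; simpl; constructor.
  - inversion Hn; subst. intros Hi. apply in_map_iff in Hi. destruct Hi as [x [Ex Hx]].
    apply H2. rewrite (H a x); simpl; auto. apply in_map; auto.
  - inversion Hn; subst. apply IHl; auto. intros; apply H; simpl; auto. Qed.
Lemma sumL_ge_elem {A} (f : A -> R) l x : (forall y, In y l -> 0 <= f y) -> In x l -> f x <= sumL f l.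
Proof. induction l; intros H Hx; destruct Hx; subst; rewrite sumL_cons.
  - assert (0 <= sumL f l) by (apply sumL_nonneg; intros; apply H; simpl; auto). lra.
  - assert (0 <= f a) by (apply H; simpl; auto). assert (f x <= sumL f l) by (apply IHl; auto; intros; apply H; simpl; auto). lra. Qed.
Lemma all_finite_map {A} (f : A -> Z) (h : A -> C) l :
  all_finite (map (fun x => (f x, Some (h x))) l) = Some (map (fun x => (f x, h x)) l).
Proof. induction l; simpl; auto. rewrite IHl. reflexivity. Qed.
Lemma all_finite_None (l : symbol) k : In (k, None) l -> all_finite l = None.
Proof. induction l as [|[k' [z|]] t IH]; intros H; simpl; destruct H; try congruence.
  rewrite IH; auto. Qed.
Lemma fold_Zadd_app l1 l2 : fold_right Z.add 0%Z (l1 ++ l2) = (fold_right Z.add 0 l1 + fold_right Z.add 0 l2)%Z.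
Proof. induction l1; simpl; lia. Qed.
Lemma fold_Zadd_opp l : fold_right Z.add 0%Z (map Z.opp l) = (- fold_right Z.add 0 l)%Z.
Proof. induction l; simpl; lia. Qed.

Definition zval (p : Z * pt) : C := match snd p with Some z => z | None => RtoC 0 end.
Definition good (Zs : symbol) : Prop := distinct_pts Zs /\ List.Forall (fun kp => in_B0 (snd kp)) Zs.
Definition qZ (Zs : symbol) : Z := fold_right Z.add 0%Z (map fst Zs).

Definition Lam (s : C -> R) (Zs : symbol) : R :=
  -(1/(8*PI)) * sumL (fun p => IZR (fst p) ^ 2 * s (zval p)) Zs
  + pairsum (fun p q => IZR (fst p) * IZR (fst q) / (2 * PI) * ln (Cmod (Cminus (zval p) (zval q)))) Zs.
Definition Tk (Z1 Z2 : symbol) : R :=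
  sumL (fun p => sumL (fun q => - (IZR (fst p) * IZR (fst q)) / (2 * PI) *
           ln (Cmod (Cminus (RtoC 1) (Cmult (Cconj (zval p)) (zval q))))) Z2) Z1.
Definition Kform (g : sphere_metric) (Z1 Z2 : symbol) : R :=
  if Z.eq_dec (qZ Z1) (qZ Z2) then exp (Lam (sigma g) Z1 + Lam (sigma g) Z2 + Tk Z1 Z2) else 0.

Definition ann (Z1 Z2 : symbol) : list (Z * C * bool) :=
  map (fun p => (fst p, zval p, true)) Z1 ++ map (fun p => (fst p, zval p, false)) Z2.
Definition ch (x : Z * C * bool) : Z := if snd x then Z.opp (fst (fst x)) else fst (fst x).
Definition src (x : Z * C * bool) : C := snd (fst x).
Definition Dann (x y : Z * C * bool) : R :=
  if snd x then (if snd y then ln (Cmod (Cminus (src x) (src y)))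
                 else ln (Cmod (Cminus (RtoC 1) (Cmult (Cconj (src x)) (src y)))))
  else (if snd y then ln (Cmod (Cminus (RtoC 1) (Cmult (Cconj (src y)) (src x))))
        else ln (Cmod (Cminus (src x) (src y)))).

Lemma pairsum_ext {A} (f g : A -> A -> R) l : (forall x y, f x y = g x y) -> pairsum f l = pairsum g l.
Proof. intros H. apply pairsum_FOP. induction l; constructor; auto. apply Forall_forall; auto. Qed.

Lemma rhs_ann (s : C -> R) Z1 Z2 :
  -(1/(8*PI)) * sumL (fun p => IZR (ch p) ^ 2 * s (src p)) (ann Z1 Z2)
  + pairsum (fun p q => IZR (ch p) * IZR (ch q) / (2 * PI) * Dann p q) (ann Z1 Z2)
  = Lam s Z1 + Lam s Z2 + Tk Z1 Z2.
Proof. unfold ann, Lam, Tk. rewrite sumL_app, pairsum_app, !sumL_map, !pairsum_map.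
  rewrite (sumL_ext (fun x => sumL _ _) (fun p => sumL (fun q => - (IZR (fst p) * IZR (fst q)) / (2 * PI) *
           ln (Cmod (Cminus (RtoC 1) (Cmult (Cconj (zval p)) (zval q))))) Z2)).
  2:{ intros x Hx. rewrite sumL_map. apply sumL_ext. intros y Hy. unfold ch, Dann, src; simpl.
      rewrite !opp_IZR. field. apply PI_neq0. }
  rewrite (pairsum_ext (fun x y => IZR (ch (fst x, zval x, true)) * _ / _ * _)
     (fun p q => IZR (fst p) * IZR (fst q) / (2 * PI) * ln (Cmod (Cminus (zval p) (zval q))))).
  2:{ intros. unfold ch, Dann, src; simpl. rewrite !opp_IZR. field. apply PI_neq0. }
  rewrite (sumL_ext (fun x => IZR (ch (fst x, zval x, true)) ^ 2 * _) (fun p => IZR (fst p) ^ 2 * s (zval p))).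
  2:{ intros. unfold ch, src; simpl. rewrite !opp_IZR. ring. }
  unfold ch, Dann, src; simpl. ring. Qed.

Lemma good_pt Zs p : good Zs -> In p Zs -> snd p = Some (zval p) /\ Cmod (zval p) < 1.
Proof. intros [_ H] Hp. rewrite Forall_forall in H. specialize (H p Hp).
  unfold zval. destruct (snd p); simpl in *; auto. contradiction. Qed.
Lemma good_map Zs : good Zs -> Zs = map (fun p => (fst p, Some (zval p))) Zs.
Proof. intros H. rewrite <- (map_id Zs) at 1. apply map_ext_in. intros [k z] Hp.
  destruct (good_pt _ _ H Hp) as [E _]. simpl in *. rewrite E. reflexivity. Qed.
Lemma good_FOP (R0 : Z * pt -> Z * pt -> Prop) Zs : good Zs ->
  (forall p q, In p Zs -> In q Zs -> zval p <> zval q -> R0 p q) -> ForallOrdPairs R0 Zs.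
Proof. intros Hg H. apply (FOP_nodup R0 snd). apply Hg.
  intros a b Ha Hb E. apply H; auto. intros E2. apply E.
  rewrite (proj1 (good_pt _ _ Hg Ha)), (proj1 (good_pt _ _ Hg Hb)), E2. reflexivity. Qed.

Lemma Cinv_inv x : x <> RtoC 0 -> Cinv (Cinv x) = x.
Proof. intros H. field. auto. Qed.

Lemma theta_inj w w' : theta (Some w) = theta (Some w') -> w = w'.
Proof. unfold theta. destruct (Ceq_dec w 0), (Ceq_dec w' 0); intros E; try congruence.
  assert (H0 : thetaC w = thetaC w') by congruence. unfold thetaC in H0.
  assert (Cconj w = Cconj w').
  { rewrite <- (Cinv_inv (Cconj w)), <- (Cinv_inv (Cconj w')), H0; auto; apply Cconj_neq0; auto. }
  rewrite <- (Cconj_conj w), <- (Cconj_conj w'), H. reflexivity. Qed.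

Lemma Theta_good Z1 : good Z1 -> Theta_sym Z1 = map (fun p => (Z.opp (fst p), theta (Some (zval p)))) Z1.
Proof. intros H. unfold Theta_sym. apply map_ext_in. intros p Hp.
  rewrite (proj1 (good_pt _ _ H Hp)). reflexivity. Qed.

Lemma Y_distinct Z1 Z2 : good Z1 -> good Z2 -> distinct_pts (Theta_sym Z1 ++ Z2).
Proof. intros H1 H2. unfold distinct_pts. rewrite Theta_good by auto. rewrite map_app, map_map. simpl.
  apply NoDup_app.
  - apply (NoDup_map_transfer snd). apply H1.
    intros x y Hx Hy E. apply theta_inj in E.
    rewrite (proj1 (good_pt _ _ H1 Hx)), (proj1 (good_pt _ _ H1 Hy)), E. reflexivity.
  - apply H2.
  - intros a Ha Hb. apply in_map_iff in Ha. destruct Ha as [p [Ep Hp]].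
    apply in_map_iff in Hb. destruct Hb as [q [Eq Hq]].
    destruct (good_pt _ _ H1 Hp) as [_ Hw]. destruct (good_pt _ _ H2 Hq) as [Es Hz].
    rewrite Es in Eq. rewrite <- Eq in Ep. unfold theta in Ep. destruct (Ceq_dec (zval p) 0) as [e|e]; try congruence.
    inversion Ep. rewrite <- H0 in Hz. rewrite Cmod_thetaC in Hz by auto.
    assert (0 < Cmod (zval p)) by (apply Cmod_pos; auto).
    assert (1 < / Cmod (zval p)). { rewrite <- Rinv_1. apply Rinv_lt_contravar; lra. }
    lra. Qed.

Lemma ann_FOP (Rel : Z * C * bool -> Z * C * bool -> Prop) Z1 Z2 : good Z1 -> good Z2 ->
  (forall p q, In p Z1 -> In q Z1 -> zval p <> zval q -> Rel (fst p, zval p, true) (fst q, zval q, true)) ->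
  (forall p q, In p Z2 -> In q Z2 -> zval p <> zval q -> Rel (fst p, zval p, false) (fst q, zval q, false)) ->
  (forall p q, In p Z1 -> In q Z2 -> Rel (fst p, zval p, true) (fst q, zval q, false)) ->
  ForallOrdPairs Rel (ann Z1 Z2).
Proof. intros G1 G2 H11 H22 H12. unfold ann. apply FOP_app.
  - apply FOP_map. apply good_FOP; auto.
  - apply FOP_map. apply good_FOP; auto.
  - intros x y Hx Hy. apply in_map_iff in Hx, Hy. destruct Hx as [p [<- Hp]]. destruct Hy as [q [<- Hq]].
    auto. Qed.

Lemma ann_Forall (P : Z * C * bool -> Prop) Z1 Z2 :
  (forall p, In p Z1 -> P (fst p, zval p, true)) -> (forall q, In q Z2 -> P (fst q, zval q, false)) ->
  List.Forall P (ann Z1 Z2).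
Proof. intros H1 H2. unfold ann. apply Forall_app. split; apply Forall_forall; intros x Hx;
  apply in_map_iff in Hx; destruct Hx as [p [<- Hp]]; auto. Qed.

Lemma ann_charges Z1 Z2 : fold_right Z.add 0%Z (map ch (ann Z1 Z2)) = (qZ Z2 - qZ Z1)%Z.
Proof. unfold ann, qZ. rewrite map_app, fold_Zadd_app, !map_map. unfold ch; simpl.
  rewrite <- (map_map fst Z.opp), fold_Zadd_opp. change (map (fun x : Z * pt => fst x) Z2) with (map fst Z2). lia. Qed.

Lemma E_fin_ann (g : sphere_metric) s (pos : Z * C * bool -> C) (L : Z * C * bool -> R) Z1 Z2 :
  ForallOrdPairs (fun p q => ln (Cmod (Cminus (pos p) (pos q))) = Dann p q + L p + L q) (ann Z1 Z2) ->
  List.Forall (fun p => s (pos p) = sigma g (src p) - 4 * L p) (ann Z1 Z2) ->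
  E_fin s (map (fun x => (ch x, pos x)) (ann Z1 Z2)) = Kform g Z1 Z2.
Proof. intros Hp Hs. rewrite E_fin_exp. rewrite map_map. simpl. change (map (fun x : Z * C * bool => ch x) (ann Z1 Z2)) with (map ch (ann Z1 Z2)).
  rewrite (ann_charges Z1 Z2). unfold Kform.
  destruct (Z.eq_dec (qZ Z1) (qZ Z2)), (Z.eq_dec (qZ Z2 - qZ Z1) 0); try lia; auto.
  f_equal. rewrite <- (rhs_ann (sigma g)).
  apply (covariance (ann Z1 Z2) ch pos s (fun p => sigma g (src p)) L Dann); auto.
  rewrite <- sum_charges_IZR, ann_charges. replace (qZ Z2 - qZ Z1)%Z with 0%Z by lia. reflexivity. Qed.

Lemma Cminus_neq0 w w' : w <> w' -> Cminus w w' <> RtoC 0.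
Proof. intros H E. apply H. rewrite <- (Cplus_0_l w'), <- E. ring. Qed.
Lemma Cmod_minus_sym w w' : Cmod (Cminus w w') = Cmod (Cminus w' w).
Proof. rewrite <- Cmod_opp. f_equal. ring. Qed.
Lemma ln_Cmod_1 : ln (Cmod (RtoC 1)) = 0.
Proof. rewrite Cmod_1. apply ln_1. Qed.

Lemma kernel_A g Z1 Z2 : reflection_invariant g -> good Z1 -> good Z2 ->
  (forall p, In p Z1 -> zval p <> RtoC 0) -> E_sym g (Theta_sym Z1 ++ Z2) = Kform g Z1 Z2.
Proof. intros Hinv G1 G2 Hnz. unfold E_sym.
  destruct (excluded_middle_informative _) as [_|n]; [|exfalso; apply n, Y_distinct; auto].
  set (posA := fun x : Z * C * bool => if snd x then thetaC (src x) else src x).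
  assert (EY : Theta_sym Z1 ++ Z2 = map (fun x => (ch x, Some (posA x))) (ann Z1 Z2)).
  { rewrite Theta_good by auto. rewrite (good_map Z2) at 1 by auto. unfold ann.
    rewrite map_app, !map_map. f_equal; apply map_ext_in; intros p Hp; unfold ch, posA, src; simpl; auto.
    unfold theta. destruct Ceq_dec as [e|e]; [exfalso; apply (Hnz p); auto | reflexivity]. }
  rewrite EY, all_finite_map.
  apply E_fin_ann with (L := fun x : Z * C * bool => if snd x then - ln (Cmod (src x)) else 0).
  - apply ann_FOP; auto; intros p q Hp Hq; unfold posA, Dann, src; simpl.
    + intros Hne. assert (Hw := Hnz p Hp). assert (Hw' := Hnz q Hq).
      replace (Cminus (thetaC (zval p)) (thetaC (zval q))) with
        (Cdiv (Cminus (Cconj (zval q)) (Cconj (zval p))) (Cmult (Cconj (zval p)) (Cconj (zval q)))).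
      2:{ unfold thetaC. field. split; apply Cconj_neq0; auto. }
      rewrite ln_Cmod_q; try apply Cconj_neq0; auto.
      2:{ rewrite <- Cminus_conj. apply Cconj_neq0, Cminus_neq0. auto. }
      rewrite <- Cminus_conj, !Cmod_conj, (Cmod_minus_sym (zval q)). ring.
    + intros _. ring.
    + assert (Hw := Hnz p Hp).
      destruct (good_pt _ _ G1 Hp) as [_ Hw1]. destruct (good_pt _ _ G2 Hq) as [_ Hz1].
      replace (Cminus (thetaC (zval p)) (zval q)) with
        (Cdiv (Cminus (RtoC 1) (Cmult (Cconj (zval p)) (zval q))) (Cmult (Cconj (zval p)) (RtoC 1))).
      2:{ unfold thetaC. field. apply Cconj_neq0; auto. }
      rewrite ln_Cmod_q; try apply Cconj_neq0; auto.
      2:{ apply one_minus_neq0, Cmod_conj_mult_lt1; auto. }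
      2:{ intro E. injection E. lra. }
      rewrite Cmod_conj, ln_Cmod_1. ring.
  - apply ann_Forall; intros p Hp; unfold posA, src; simpl.
    + assert (Hw := Hnz p Hp). rewrite (proj1 Hinv (zval p) Hw). ring.
    + ring.
Qed.

Definition ptmod (kp : Z * pt) : R := match snd kp with Some z => Cmod z | None => 0 end.

Lemma theta_nz w : w <> RtoC 0 -> theta (Some w) = Some (thetaC w).
Proof. intros H. unfold theta. destruct Ceq_dec; [contradiction|reflexivity]. Qed.
Lemma theta_z : theta (Some (RtoC 0)) = None.
Proof. unfold theta. destruct Ceq_dec; [reflexivity|congruence]. Qed.

Lemma caseB_bounds Z1 Z2 : good Z1 -> good Z2 ->
  1 <= 1 + sumL ptmod (Theta_sym Z1 ++ Z2) /\
  (forall p, In p Z1 -> zval p <> RtoC 0 -> / Cmod (zval p) <= sumL ptmod (Theta_sym Z1 ++ Z2)).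
Proof. intros G1 G2.
  assert (Hnn : forall y, In y (Theta_sym Z1 ++ Z2) -> 0 <= ptmod y).
  { intros [k [z|]] _; unfold ptmod; simpl. apply Cmod_ge_0. lra. }
  split.
  - assert (0 <= sumL ptmod (Theta_sym Z1 ++ Z2)) by (apply sumL_nonneg; auto). lra.
  - intros p Hp Hw. rewrite <- (Cmod_thetaC _ Hw).
    change (Cmod (thetaC (zval p))) with (ptmod (Z.opp (fst p), Some (thetaC (zval p)))).
    apply sumL_ge_elem; auto. rewrite Theta_good by auto. apply in_or_app; left.
    rewrite <- theta_nz by auto. apply (in_map (fun p => (Z.opp (fst p), theta (Some (zval p))))). auto. Qed.

Lemma kernel_B g Z1 Z2 : reflection_invariant g -> good Z1 -> good Z2 ->
  (exists p0, In p0 Z1 /\ zval p0 = RtoC 0) -> E_sym g (Theta_sym Z1 ++ Z2) = Kform g Z1 Z2.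
Proof. intros Hinv G1 G2 [p0 [Hp0 Hz0]]. unfold E_sym.
  destruct (excluded_middle_informative _) as [_|n]; [|exfalso; apply n, Y_distinct; auto].
  rewrite (all_finite_None _ (Z.opp (fst p0))).
  2:{ rewrite Theta_good by auto. apply in_or_app; left. rewrite <- theta_z, <- Hz0.
      apply (in_map (fun p => (Z.opp (fst p), theta (Some (zval p))))). auto. }
  destruct (caseB_bounds Z1 Z2 G1 G2) as [HA1 HA2].
  change (choose_a (Theta_sym Z1 ++ Z2)) with (RtoC (1 + sumL ptmod (Theta_sym Z1 ++ Z2))).
  set (A := 1 + sumL ptmod (Theta_sym Z1 ++ Z2)) in *.
  assert (F1 : forall q, In q Z2 -> Cminus (zval q) (RtoC A) <> RtoC 0).
  { intros q Hq E. destruct (good_pt _ _ G2 Hq) as [_ Hz].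
    assert (zval q = RtoC A) by (rewrite <- (Cplus_0_l (RtoC A)), <- E; ring).
    rewrite H, Cmod_R, Rabs_pos_eq in Hz; lra. }
  assert (F2 : forall p, In p Z1 -> Cminus (RtoC 1) (Cmult (RtoC A) (Cconj (zval p))) <> RtoC 0).
  { intros p Hp E. destruct (Ceq_dec (zval p) (RtoC 0)) as [e|e].
    - rewrite e, Cconj_0 in E. assert (H1 : RtoC 1 = RtoC 0) by (rewrite <- E; ring).
      injection H1. lra.
    - assert (H1 : Cmult (RtoC A) (Cconj (zval p)) = RtoC 1).
      { transitivity (Cminus (RtoC 1) (Cminus (RtoC 1) (Cmult (RtoC A) (Cconj (zval p))))); [ring|].
        rewrite E. ring. }
      apply (f_equal Cmod) in H1. rewrite Cmod_mult, Cmod_R, Cmod_conj, Cmod_1, Rabs_pos_eq in H1 by lra.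
      assert (Hw := HA2 p Hp e). assert (0 < Cmod (zval p)) by (apply Cmod_pos; auto).
      assert (A = / Cmod (zval p)) by (field_simplify_eq; lra).
      unfold A in *. lra. }
  assert (Fpos : forall p, In p Z1 -> beta_inv (RtoC A) (theta (Some (zval p))) =
       Cdiv (Cconj (zval p)) (Cminus (RtoC 1) (Cmult (RtoC A) (Cconj (zval p))))).
  { intros p Hp. destruct (Ceq_dec (zval p) (RtoC 0)) as [e|e].
    - rewrite e, theta_z, Cconj_0. simpl beta_inv. unfold Cdiv. ring.
    - rewrite theta_nz by auto. simpl beta_inv. unfold thetaC. field. split; auto.
      apply Cconj_neq0; auto. }
  set (posB := fun x : Z * C * bool => if snd x then beta_inv (RtoC A) (theta (Some (src x)))
                                       else beta_inv (RtoC A) (Some (src x))).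
  assert (EY : map (fun kp => (fst kp, beta_inv (RtoC A) (snd kp))) (Theta_sym Z1 ++ Z2)
               = map (fun x => (ch x, posB x)) (ann Z1 Z2)).
  { rewrite Theta_good by auto. rewrite (good_map Z2) at 1 by auto. unfold ann.
    rewrite !map_app, !map_map. f_equal; apply map_ext_in; intros p Hp; unfold ch, posB, src; simpl; auto. }
  simpl. rewrite EY.
  apply E_fin_ann with (L := fun x : Z * C * bool => if snd x
      then - ln (Cmod (Cminus (RtoC 1) (Cmult (RtoC A) (Cconj (src x)))))
      else - ln (Cmod (Cminus (src x) (RtoC A)))).
  - apply ann_FOP; auto; intros p q Hp Hq; unfold posB, Dann, src; cbn [fst snd].
    + intros Hne. rewrite (Fpos p Hp), (Fpos q Hq).
      replace (Cminus (Cdiv (Cconj (zval p)) (Cminus 1 (Cmult A (Cconj (zval p)))))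
                      (Cdiv (Cconj (zval q)) (Cminus 1 (Cmult A (Cconj (zval q))))))
        with (Cdiv (Cminus (Cconj (zval p)) (Cconj (zval q)))
                   (Cmult (Cminus 1 (Cmult A (Cconj (zval p)))) (Cminus 1 (Cmult A (Cconj (zval q)))))).
      2:{ field. split; auto. }
      rewrite ln_Cmod_q; auto.
      2:{ rewrite <- Cminus_conj. apply Cconj_neq0, Cminus_neq0. auto. }
      rewrite <- Cminus_conj, Cmod_conj. ring.
    + intros Hne. unfold beta_inv.
      replace (Cminus (Cinv (Cminus (zval p) A)) (Cinv (Cminus (zval q) A)))
        with (Cdiv (Cminus (zval q) (zval p)) (Cmult (Cminus (zval p) A) (Cminus (zval q) A))).
      2:{ field. split; auto. }
      rewrite ln_Cmod_q; auto.
      2:{ apply Cminus_neq0. auto. }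
      rewrite (Cmod_minus_sym (zval q)). ring.
    + destruct (good_pt _ _ G1 Hp) as [_ Hw1]. destruct (good_pt _ _ G2 Hq) as [_ Hz1].
      rewrite (Fpos p Hp). unfold beta_inv.
      replace (Cminus (Cdiv (Cconj (zval p)) (Cminus 1 (Cmult A (Cconj (zval p))))) (Cinv (Cminus (zval q) A)))
        with (Cdiv (Copp (Cminus (RtoC 1) (Cmult (Cconj (zval p)) (zval q))))
                   (Cmult (Cminus 1 (Cmult A (Cconj (zval p)))) (Cminus (zval q) A))).
      2:{ field. split; auto. }
      rewrite ln_Cmod_q; auto.
      2:{ intro E. apply (one_minus_neq0 (Cmult (Cconj (zval p)) (zval q))).
          apply Cmod_conj_mult_lt1; auto.
          transitivity (Copp (Copp (Cminus (RtoC 1) (Cmult (Cconj (zval p)) (zval q))))); [ring|]. rewrite E. ring. }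
      rewrite Cmod_opp. ring.
  - apply ann_Forall; intros p Hp; unfold posB, src; cbn [fst snd].
    + unfold pull_sigma. destruct (Ceq_dec (zval p) (RtoC 0)) as [e|e].
      * rewrite e, theta_z. simpl beta_inv. destruct (Ceq_dec (RtoC 0) (RtoC 0)); [|congruence].
        rewrite (proj2 Hinv), Cconj_0. replace (Cminus (RtoC 1) (Cmult (RtoC A) (RtoC 0))) with (RtoC 1) by ring.
        rewrite ln_Cmod_1. ring.
      * rewrite (Fpos p Hp). assert (Hd := F2 p Hp). assert (Hc := Cconj_neq0 _ e).
        destruct (Ceq_dec _ _) as [E|_].
        { exfalso. apply Hc. transitivity (Cmult (Cdiv (Cconj (zval p)) (Cminus 1 (Cmult A (Cconj (zval p)))))
                                                  (Cminus 1 (Cmult A (Cconj (zval p))))).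
          field; auto. rewrite E. ring. }
        replace (Cplus A (Cinv (Cdiv (Cconj (zval p)) (Cminus 1 (Cmult A (Cconj (zval p)))))))
          with (thetaC (zval p)) by (unfold thetaC; field; auto).
        rewrite Cmod_div, Cmod_conj by auto. unfold Rdiv.
        assert (0 < Cmod (zval p)) by (apply Cmod_pos; auto).
        assert (0 < Cmod (Cminus 1 (Cmult A (Cconj (zval p))))) by (apply Cmod_pos; auto).
        rewrite ln_mult, ln_Rinv; auto; [|apply Rinv_0_lt_compat; auto].
        rewrite (proj1 Hinv (zval p) e). ring.
    + destruct (good_pt _ _ G2 Hp) as [_ Hz1]. assert (Hd := F1 p Hp).
      unfold beta_inv, pull_sigma. destruct (Ceq_dec _ _) as [E|_].
      { exfalso. assert (H1 : RtoC 1 = RtoC 0).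
        { rewrite <- (Cinv_r (Cminus (zval p) A)) by auto. rewrite E. ring. }
        injection H1. lra. }
      replace (Cplus A (Cinv (Cinv (Cminus (zval p) A)))) with (zval p) by (field; auto).
      rewrite Cmod_inv, ln_Rinv by (auto; apply Cmod_pos; auto). ring.
Qed.

Lemma kernel g Z1 Z2 : reflection_invariant g -> good Z1 -> good Z2 ->
  E_sym g (Theta_sym Z1 ++ Z2) = Kform g Z1 Z2.
Proof. intros Hinv G1 G2.
  destruct (excluded_middle_informative (exists p0, In p0 Z1 /\ zval p0 = RtoC 0)) as [H|H].
  - apply kernel_B; auto.
  - apply kernel_A; auto. intros p Hp E. apply H. exists p; auto. Qed.

Lemma Cconj_1 : Cconj (RtoC 1) = RtoC 1.
Proof. apply injective_projections; simpl; ring. Qed.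

Lemma cpow_mult_conj w z m : cpow (Cmult (Cconj w) z) m = Cmult (Cconj (cpow w m)) (cpow z m).
Proof. induction m; simpl. rewrite Cconj_1. ring. rewrite IHm, Cmult_conj. ring. Qed.

Lemma Re_conj_mult u v : Re (Cmult (Cconj u) v) = Re u * Re v + Im u * Im v.
Proof. destruct u, v. unfold Re, Im; simpl. ring. Qed.

Lemma Tk_sym Z1 Z2 : Tk Z1 Z2 = Tk Z2 Z1.
Proof. unfold Tk. rewrite sumL_swap. apply sumL_ext; intros; apply sumL_ext; intros.
  replace (Cmod (Cminus (RtoC 1) (Cmult (Cconj (zval x0)) (zval x))))
    with (Cmod (Cminus (RtoC 1) (Cmult (Cconj (zval x)) (zval x0)))).
  - field. apply PI_neq0.
  - rewrite <- (Cmod_conj (Cminus (RtoC 1) (Cmult (Cconj (zval x)) (zval x0)))).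
    rewrite Cminus_conj, Cmult_conj, Cconj_conj, Cconj_1. f_equal. f_equal. ring. Qed.

Lemma Kform_sym g Z1 Z2 : Kform g Z1 Z2 = Kform g Z2 Z1.
Proof. unfold Kform. rewrite Tk_sym. destruct (Z.eq_dec (qZ Z1) (qZ Z2)), (Z.eq_dec (qZ Z2) (qZ Z1));
  try lia; auto. f_equal. ring. Qed.

Definition alph (n : nat) : R := / (2 * PI * INR (S n)).
Definition phiF (n : nat) (Zs : symbol) : R := sumL (fun p => IZR (fst p) * Re (cpow (zval p) (S n))) Zs.
Definition psiF (n : nat) (Zs : symbol) : R := sumL (fun p => IZR (fst p) * Im (cpow (zval p) (S n))) Zs.

Lemma Tk_lim Z1 Z2 : good Z1 -> good Z2 ->
  is_lim_seq (fun N => sumN (fun n => alph n * (phiF n Z1 * phiF n Z2 + psiF n Z1 * psiF n Z2)) N) (Tk Z1 Z2).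
Proof. intros G1 G2.
  apply (is_lim_seq_ext (fun N => sumL (fun p => sumL (fun q => IZR (fst p) * IZR (fst q) / (2 * PI) *
      sumN (fun n => Re (cpow (Cmult (Cconj (zval p)) (zval q)) (S n)) / INR (S n)) N) Z2) Z1)).
  - intros N.
    rewrite (sumL_ext _ (fun p => sumN (fun n => sumL (fun q => IZR (fst p) * IZR (fst q) / (2 * PI) *
        (Re (cpow (Cmult (Cconj (zval p)) (zval q)) (S n)) / INR (S n))) Z2) N)).
    2:{ intros p _. rewrite <- sumL_sumN. apply sumL_ext; intros q _. symmetry. apply sumN_scal. }
    rewrite sumL_sumN. apply sumN_ext. intros n _.
    unfold phiF, psiF, alph.
    rewrite (sumL_ext _ (fun p => (alph n * (IZR (fst p) * Re (cpow (zval p) (S n)))) * phiF n Z2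
                               + (alph n * (IZR (fst p) * Im (cpow (zval p) (S n)))) * psiF n Z2)).
    + rewrite sumL_plus. unfold alph.
      rewrite (sumL_ext (fun p => _ * phiF n Z2) (fun p => (phiF n Z2 * / (2 * PI * INR (S n))) * (IZR (fst p) * Re (cpow (zval p) (S n))))) by (intros; ring).
      rewrite (sumL_ext (fun p => _ * psiF n Z2) (fun p => (psiF n Z2 * / (2 * PI * INR (S n))) * (IZR (fst p) * Im (cpow (zval p) (S n))))) by (intros; ring).
      rewrite !sumL_scal. unfold phiF, psiF. ring.
    + intros p _. unfold phiF, psiF.
      rewrite <- !sumL_scal, <- sumL_plus. apply sumL_ext; intros q _.
      rewrite cpow_mult_conj, Re_conj_mult. unfold alph. field.
      split; [apply not_0_INR; lia | apply PI_neq0].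
  - unfold Tk. apply sumL_lim; intros p Hp. apply sumL_lim; intros q Hq.
    destruct (good_pt _ _ G1 Hp) as [_ Hw]. destruct (good_pt _ _ G2 Hq) as [_ Hz].
    replace (- (IZR (fst p) * IZR (fst q)) / (2 * PI) * ln (Cmod (Cminus (RtoC 1) (Cmult (Cconj (zval p)) (zval q)))))
      with (IZR (fst p) * IZR (fst q) / (2 * PI) * (- ln (Cmod (Cminus (RtoC 1) (Cmult (Cconj (zval p)) (zval q))))))
      by (field; apply PI_neq0).
    apply lim_scal. apply log_series. apply Cmod_conj_mult_lt1; auto. Qed.

Lemma Kform_PSD g : PSD good (Kform g).
Proof. intros l y Hl.
  assert (HT : PSD good (fun a b => exp (Tk a b))).
  { apply (PSD_lim good (fun N a b => exp (sumN (fun n => alph n * (phiF n a * phiF n b + psiF n a * psiF n b)) N))).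
    + intros N. apply PSD_expsum. intros n. unfold alph. left. apply Rinv_0_lt_compat.
      apply Rmult_lt_0_compat. apply Rmult_lt_0_compat; [lra | apply PI_RGT_0]. apply lt_0_INR; lia.
    + intros a b Ha Hb. apply is_lim_seq_continuous. apply derivable_continuous_pt, derivable_pt_exp.
      apply Tk_lim; auto. }
  assert (HP := PSD_scale good (fun a b => exp (Tk a b)) (fun a => exp (Lam (sigma g) a)) HT).
  assert (HI := PSD_indic good _ qZ HP l y Hl).
  rewrite (Qf_ext _ (fun a b => if Z.eq_dec (qZ a) (qZ b) then
       exp (Lam (sigma g) a) * exp (Lam (sigma g) b) * exp (Tk a b) else 0)); auto.
  intros a b _ _. unfold Kform. destruct Z.eq_dec; auto. rewrite <- !exp_plus. reflexivity.
Qed.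

Definition sumC {A} (f : A -> C) (l : list A) : C := fold_right Cplus (RtoC 0) (map f l).

Lemma sumC_cons {A} (f : A -> C) x l : sumC f (x :: l) = Cplus (f x) (sumC f l).
Proof. reflexivity. Qed.
Lemma sumC_ext {A} (f g : A -> C) l : (forall x, In x l -> f x = g x) -> sumC f l = sumC g l.
Proof. induction l; intros H; auto. rewrite !sumC_cons, H, IHl; simpl; auto. intros; apply H; simpl; auto. Qed.
Lemma sumC_zero {A} (f : A -> C) l : (forall x, In x l -> f x = RtoC 0) -> sumC f l = RtoC 0.
Proof. induction l; intros H; auto. rewrite sumC_cons, H, IHl; simpl; auto. ring. intros; apply H; simpl; auto. Qed.
Lemma sumC_plus {A} (f g : A -> C) l : sumC (fun x => Cplus (f x) (g x)) l = Cplus (sumC f l) (sumC g l).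
Proof. induction l. unfold sumC; simpl; ring. rewrite !sumC_cons, IHl. ring. Qed.
Lemma sumC_scal {A} (f : A -> C) c l : sumC (fun x => Cmult c (f x)) l = Cmult c (sumC f l).
Proof. induction l. unfold sumC; simpl; ring. rewrite !sumC_cons, IHl. ring. Qed.
Lemma sumC_app {A} (f : A -> C) l1 l2 : sumC f (l1 ++ l2) = Cplus (sumC f l1) (sumC f l2).
Proof. induction l1. unfold sumC; simpl; ring. simpl. rewrite !sumC_cons, IHl1. ring. Qed.
Lemma sumC_map {A B} (f : B -> C) (g : A -> B) l : sumC f (map g l) = sumC (fun x => f (g x)) l.
Proof. unfold sumC. rewrite map_map. reflexivity. Qed.
Lemma sumC_flat_map {A B} (f : B -> C) (g : A -> list B) l :
  sumC f (flat_map g l) = sumC (fun x => sumC f (g x)) l.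
Proof. induction l; auto. simpl. rewrite sumC_app, IHl. reflexivity. Qed.
Lemma sumC_swap {A B} (f : A -> B -> C) l1 l2 :
  sumC (fun x => sumC (fun y => f x y) l2) l1 = sumC (fun y => sumC (fun x => f x y) l1) l2.
Proof. induction l1.
  - symmetry; apply sumC_zero; reflexivity.
  - rewrite sumC_cons, IHl1, <- sumC_plus. apply sumC_ext; intros; rewrite sumC_cons; reflexivity. Qed.
Lemma sumC_filter {A} (f : A -> C) (p : A -> bool) l :
  (forall x, In x l -> p x = false -> f x = RtoC 0) -> sumC f l = sumC f (filter p l).
Proof. induction l; intros H; simpl; auto. destruct (p a) eqn:E.
  - rewrite !sumC_cons, IHl; auto. intros; apply H; simpl; auto.
  - rewrite sumC_cons, H, IHl; simpl; auto; [ring|]. intros; apply H; simpl; auto. Qed.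
Lemma sumC_indic (V : list symbol) u (f : symbol -> C) : NoDup V -> In u V ->
  sumC (fun v => if sym_eq_dec u v then f v else RtoC 0) V = f u.
Proof. induction V; intros Hn Hi; [destruct Hi|]. inversion Hn; subst. rewrite sumC_cons. cbv beta.
  destruct (sym_eq_dec u a).
  - subst. rewrite sumC_zero; [ring|]. intros x Hx. destruct (sym_eq_dec a x); subst; auto; contradiction.
  - destruct Hi; [congruence|]. rewrite IHV; auto; ring. Qed.
Lemma Re_sumC {A} (f : A -> C) l : Re (sumC f l) = sumL (fun x => Re (f x)) l.
Proof. induction l; auto. rewrite sumC_cons, sumL_cons, <- IHl. reflexivity. Qed.
Lemma Im_sumC {A} (f : A -> C) l : Im (sumC f l) = sumL (fun x => Im (f x)) l.
Proof. induction l; auto. rewrite sumC_cons, sumL_cons, <- IHl. reflexivity. Qed.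

Lemma coef_cons cz F Zs : coef (cz :: F) Zs =
  Cplus (if sym_eq_dec (snd cz) Zs then fst cz else RtoC 0) (coef F Zs).
Proof. reflexivity. Qed.

Lemma group (phi : C -> C) (Hphi : forall x y, phi (Cplus x y) = Cplus (phi x) (phi y))
  (h : symbol -> C) (F : formal) :
  sumC (fun cz => Cmult (phi (fst cz)) (h (snd cz))) F =
  sumC (fun Zs => Cmult (phi (coef F Zs)) (h Zs)) (nodup sym_eq_dec (map snd F)).
Proof.
  assert (H0 : phi (RtoC 0) = RtoC 0).
  { assert (E := Hphi (RtoC 0) (RtoC 0)). rewrite Cplus_0_l in E.
    transitivity (Cminus (phi (RtoC 0)) (phi (RtoC 0))); [|ring].
    rewrite E at 2. ring. }
  assert (Hc : forall Zs, phi (coef F Zs) = sumC (fun cz => if sym_eq_dec (snd cz) Zs then phi (fst cz) else RtoC 0) F).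
  { intros Zs. induction F as [|cz F IH]; [exact H0|]. rewrite coef_cons, Hphi, IH, sumC_cons.
    destruct (sym_eq_dec (snd cz) Zs); auto. rewrite H0. reflexivity. }
  set (S := nodup sym_eq_dec (map snd F)).
  rewrite (sumC_ext (fun Zs => Cmult (phi (coef F Zs)) (h Zs))
     (fun Zs => sumC (fun cz => if sym_eq_dec (snd cz) Zs then Cmult (phi (fst cz)) (h Zs) else RtoC 0) F)).
  2:{ intros Zs _. rewrite Hc. rewrite Cmult_comm, <- sumC_scal. apply sumC_ext; intros.
      destruct sym_eq_dec; ring. }
  rewrite sumC_swap. apply sumC_ext. intros cz Hcz.
  rewrite (sumC_indic S (snd cz) (fun Zs => Cmult (phi (fst cz)) (h Zs))); auto.
  - apply NoDup_nodup.
  - apply nodup_In. apply in_map; auto. Qed.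

Lemma Im_conj_mult u v : Im (Cmult (Cconj u) v) = Re u * Im v - Im u * Re v.
Proof. destruct u, v. unfold Re, Im; simpl. ring. Qed.
Lemma Re_mult_R u r : Re (Cmult u (RtoC r)) = Re u * r.
Proof. destruct u. unfold Re; simpl. ring. Qed.
Lemma Im_mult_R u r : Im (Cmult u (RtoC r)) = Im u * r.
Proof. destruct u. unfold Im; simpl. ring. Qed.

Lemma quad_C (K : symbol -> symbol -> R) (d : symbol -> C) l :
  (forall a b, In a l -> In b l -> K a b = K b a) ->
  Im (sumC (fun a => Cmult (Cconj (d a)) (sumC (fun b => Cmult (d b) (RtoC (K a b))) l)) l) = 0 /\
  Re (sumC (fun a => Cmult (Cconj (d a)) (sumC (fun b => Cmult (d b) (RtoC (K a b))) l)) l)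
   = Qf K (fun a => Re (d a)) l + Qf K (fun a => Im (d a)) l.
Proof. intros Hs. split.
  - rewrite Im_sumC.
    rewrite (sumL_ext _ (fun a => sumL (fun b => Re (d a) * Im (d b) * K a b) l
                                 + - sumL (fun b => Im (d a) * Re (d b) * K a b) l)).
    2:{ intros a Ha. rewrite Im_conj_mult, Re_sumC, Im_sumC, <- !sumL_scal. unfold Rminus. rewrite <- !sumL_opp, <- !sumL_plus.
        apply sumL_ext; intros b Hb. rewrite Re_mult_R, Im_mult_R. ring. }
    rewrite sumL_plus, sumL_opp. rewrite (sumL_swap (fun a b => Im (d a) * Re (d b) * K a b)).
    rewrite (sumL_ext (fun y => sumL (fun x => Im (d x) * Re (d y) * K x y) l)
                      (fun a => sumL (fun b => Re (d a) * Im (d b) * K a b) l)).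
    + ring.
    + intros a Ha. apply sumL_ext; intros b Hb. rewrite (Hs b a) by auto. ring.
  - rewrite Re_sumC. unfold Qf. rewrite <- sumL_plus. apply sumL_ext; intros a Ha.
    rewrite Re_conj_mult, Re_sumC, Im_sumC, <- !sumL_scal, <- !sumL_plus.
    apply sumL_ext; intros b Hb. rewrite Re_mult_R, Im_mult_R. ring. Qed.

Lemma E_lin g G : E g G = sumC (fun cz => Cmult (fst cz) (RtoC (E_sym g (snd cz)))) G.
Proof. unfold E. symmetry. apply (group (fun x => x) (fun x y => eq_refl) (fun Zs => RtoC (E_sym g Zs))). Qed.

Lemma E_mul g F : E g (mul_formal (Theta F) F) =
  sumC (fun Z1 => Cmult (Cconj (coef F Z1))
     (sumC (fun Z2 => Cmult (coef F Z2) (RtoC (E_sym g (Theta_sym Z1 ++ Z2)))) (nodup sym_eq_dec (map snd F))))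
   (nodup sym_eq_dec (map snd F)).
Proof. rewrite E_lin. unfold mul_formal. rewrite sumC_flat_map. unfold Theta. rewrite sumC_map.
  rewrite (sumC_ext _ (fun cz1 => Cmult (Cconj (fst cz1)) (sumC (fun Zs => Cmult (coef F Zs)
                         (RtoC (E_sym g (Theta_sym (snd cz1) ++ Zs)))) (nodup sym_eq_dec (map snd F))))).
  - apply (group Cconj Cplus_conj (fun Z1 => sumC (fun Zs => Cmult (coef F Zs)
                         (RtoC (E_sym g (Theta_sym Z1 ++ Zs)))) (nodup sym_eq_dec (map snd F)))).
  - intros cz1 _. rewrite sumC_map. simpl.
    rewrite <- (group (fun x => x) (fun x y => eq_refl) (fun Zs => RtoC (E_sym g (Theta_sym (snd cz1) ++ Zs)))).
    rewrite <- sumC_scal. apply sumC_ext; intros. rewrite Cmult_assoc. reflexivity. Qed.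

Theorem mainTheorem14 (g : sphere_metric) (Hinv : reflection_invariant g)
  (F : formal) (HF : in_Upsilon_0_B0 F) :
  Im (E g (mul_formal (Theta F) F)) = 0 /\ 0 <= Re (E g (mul_formal (Theta F) F)).
Proof.
  rewrite E_mul.
  set (S := nodup sym_eq_dec (map snd F)).
  set (p := fun Zs => if Ceq_dec (coef F Zs) (RtoC 0) then false else true).
  set (G := filter p S).
  assert (HG : forall Zs, In Zs G -> good Zs).
  { intros Zs H. apply filter_In in H. destruct H as [_ H]. unfold p in H.
    destruct Ceq_dec; [discriminate|]. apply HF; auto. }
  assert (Hz : forall Zs, p Zs = false -> coef F Zs = RtoC 0).
  { intros Zs. unfold p. destruct Ceq_dec; auto; discriminate. }
  rewrite (sumC_filter _ p S).
  2:{ intros x _ Hx. rewrite Hz, Cconj_0 by auto. ring. }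
  fold G.
  rewrite (sumC_ext _ (fun Z1 => Cmult (Cconj (coef F Z1))
            (sumC (fun Z2 => Cmult (coef F Z2) (RtoC (Kform g Z1 Z2))) G))).
  2:{ intros Z1 H1. f_equal. rewrite (sumC_filter _ p S).
      2:{ intros x _ Hx. rewrite Hz by auto. ring. }
      fold G. apply sumC_ext. intros Z2 H2. rewrite kernel; auto. }
  destruct (quad_C (Kform g) (coef F) G) as [HI HR].
  { intros; apply Kform_sym. }
  split; auto. rewrite HR. apply Rplus_le_le_0_compat; apply Kform_PSD; auto.
Qed.
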